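(* Let $\mathcal{T}_{\mathcal{I}\times\mathcal{J}}$ be a $C_{\mathrm{sp}}$-sparse block tree for the cluster trees $\mathcal{T}_{\mathcal{I}}$ and $\mathcal{T}_{\mathcal{J}}$, and let $\mathcal{T}_x$ be a subtree of $\mathcal{T}_{\mathcal{J}}$. Let $\mathcal{B}\subseteq\mathcal{T}_{\mathcal{I}\times\mathcal{J}}$ be the smallest set of blocks such that $(\mathrm{root}(\mathcal{T}_{\mathcal{I}}),\mathrm{root}(\mathcal{T}_{\mathcal{J}}))\in\mathcal{B}$ and such that whenever $b=(t,s)\in\mathcal{B}$, $b$ is not a leaf of $\mathcal{T}_{\mathcal{I}\times\mathcal{J}}$, and $s$ is not a leaf of $\mathcal{T}_x$, all sons of $b$ in $\mathcal{T}_{\mathcal{I}\times\mathcal{J}}$ belong to $\mathcal{B}$. Let $\mathcal{T}_y := \{t\in\mathcal{T}_{\mathcal{I}} : (t,s)\in\mathcal{B}\text{ for some } s\}$. Then $s\in\mathcal{T}_x$ for every $(t,s)\in\mathcal{B}$, $\mathcal{T}_y$ is a subtree of $\mathcal{T}_{\mathcal{I}}$, and $$\#\mathcal{B}\le C_{\mathrm{sp}}\,\#\mathcal{T}_x,\qquad \#\mathcal{T}_y\le C_{\mathrm{sp}}\,\#\mathcal{T}_x.$$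
   Context: A cluster tree for a finite index set $\mathcal{I}$ is a finite rooted tree $\mathcal{T}_{\mathcal{I}}$ whose nodes $t$ (clusters) carry labels $\hat t\subseteq\mathcal{I}$, such that the root is labeled $\mathcal{I}$ and, for every cluster $t$ with a nonempty set $\mathrm{sons}(t)$ of sons, $\hat t$ is the disjoint union of the labels of its sons. A subtree $\mathcal{T}_x$ of $\mathcal{T}_{\mathcal{J}}$ is a set of clusters of $\mathcal{T}_{\mathcal{J}}$ containing the root, forming a tree with the same labels, such that every cluster of $\mathcal{T}_x$ has in $\mathcal{T}_x$ either no sons or exactly all of its sons in $\mathcal{T}_{\mathcal{J}}$; leaves of $\mathcal{T}_x$ are clusters without sons in $\mathcal{T}_x$. A block tree $\mathcal{T}_{\mathcal{I}\times\mathcal{J}}$ for $\mathcal{T}_{\mathcal{I}}$ and $\mathcal{T}_{\mathcal{J}}$ is a finite rooted tree whose nodes (blocks) are pairs $b=(t,s)$ with $t\in\mathcal{T}_{\mathcal{I}}$, $s\in\mathcal{T}_{\mathcal{J}}$ and label $\hat t\times\hat s$, whose root is $(\mathrm{root}(\mathcal{T}_{\mathcal{I}}),\mathrm{root}(\mathcal{T}_{\mathcal{J}}))$, and such that every non-leaf block $(t,s)$ has sons $\mathrm{sons}(t)\times\mathrm{sons}(s)$ (both nonempty). It is $C_{\mathrm{sp}}$-sparse if $\#\{s:(t,s)\in\mathcal{T}_{\mathcal{I}\times\mathcal{J}}\}\le C_{\mathrm{sp}}$ for all $t\in\mathcal{T}_{\mathcal{I}}$ and $\#\{t:(t,s)\in\mathcal{T}_{\mathcal{I}\times\mathcal{J}}\}\le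 C_{\mathrm{sp}}$ for all $s\in\mathcal{T}_{\mathcal{J}}$. *)

(* Defs.v *)
From mathcomp Require Import all_boot.
Set Implicit Arguments. Unset Strict Implicit. Unset Printing Implicit Defensive.

(* A finite rooted tree on the finite node type C is given by a root and a
   parent map; every node reaches the root by iterating the parent map,
   and the root has no parent. *)
Definition sons (C : finType) (par : C -> option C) (t : C) : {set C} :=
  [set u | par u == Some t].

Definition is_rooted_tree (C : finType) (root : C) (par : C -> option C) : Prop :=
  par root = None /\
  forall t : C, exists n, iter n (obind par) (Some t) = Some root.

Definition is_cluster_tree (I C : finType) (root : C) (par : C -> option C)
    (label : C -> {set I}) : Prop :=
  [/\ is_rooted_tree root par,
      label root = [set: I] &
      forall t : C, sons par t != set0 ->
        label t = \bigcup_(u in sons par t) label u /\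
        (forall u v, u \in sons par t -> v \in sons par t -> u != v ->
           [disjoint label u & label v])].

Definition bsons (C1 C2 : finType) (par1 : C1 -> option C1) (par2 : C2 -> option C2)
    (BT : {set C1 * C2}) (b : C1 * C2) : {set C1 * C2} :=
  [set b' in BT | (par1 b'.1 == Some b.1) && (par2 b'.2 == Some b.2)].

Definition is_block_tree (C1 C2 : finType) (root1 : C1) (par1 : C1 -> option C1)
    (root2 : C2) (par2 : C2 -> option C2) (BT : {set C1 * C2}) : Prop :=
  [/\ (root1, root2) \in BT,
      (forall b, b \in BT -> b != (root1, root2) ->
         exists t' s', [/\ par1 b.1 = Some t', par2 b.2 = Some s' & (t', s') \in BT]) &
      (forall b, b \in BT ->
         bsons par1 par2 BT b = set0 \/
         [/\ sons par1 b.1 != set0, sons par2 b.2 != set0 &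
             bsons par1 par2 BT b = setX (sons par1 b.1) (sons par2 b.2)])].

Definition is_sparse (C1 C2 : finType) (Csp : nat) (BT : {set C1 * C2}) : Prop :=
  (forall t : C1, #|[set s | (t, s) \in BT]| <= Csp) /\
  (forall s : C2, #|[set t | (t, s) \in BT]| <= Csp).

Definition is_subtree (C : finType) (root : C) (par : C -> option C) (X : {set C}) : Prop :=
  [/\ root \in X,
      (forall t, t \in X -> t != root -> exists u, par t = Some u /\ u \in X) &
      (forall t, t \in X -> sons par t :&: X = set0 \/ sons par t \subset X)].

Definition leaf_in (C : finType) (par : C -> option C) (X : {set C}) (t : C) : bool :=
  (t \in X) && (sons par t :&: X == set0).

Definition B_closed (C1 C2 : finType) (root1 : C1) (par1 : C1 -> option C1)
    (root2 : C2) (par2 : C2 -> option C2) (BT : {set C1 * C2}) (X : {set C2})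
    (S : {set C1 * C2}) : bool :=
  ((root1, root2) \in S) &&
  [forall b in S, (bsons par1 par2 BT b != set0) ==> ~~ leaf_in par2 X b.2 ==>
    (bsons par1 par2 BT b \subset S)].

Definition Bset (C1 C2 : finType) (root1 : C1) (par1 : C1 -> option C1)
    (root2 : C2) (par2 : C2 -> option C2) (BT : {set C1 * C2}) (X : {set C2})
    : {set C1 * C2} :=
  \bigcap_(S : {set C1 * C2} | (S \subset BT) && B_closed root1 par1 root2 par2 BT X S) S.

Definition Tyset (C1 C2 : finType) (B : {set C1 * C2}) : {set C1} :=
  [set t | [exists s, (t, s) \in B]].

(* Main.v *)
Require Import Defs.
From mathcomp Require Import all_boot.

Section Aux.
Variables (C1 C2 : finType) (root1 : C1) (par1 : C1 -> option C1)
  (root2 : C2) (par2 : C2 -> option C2) (BT : {set C1 * C2}) (X : {set C2}).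

Local Notation B := (Bset root1 par1 root2 par2 BT X).
Local Notation closed := (B_closed root1 par1 root2 par2 BT X).
Local Notation bs := (bsons par1 par2 BT).

Lemma B_min (S : {set C1 * C2}) : S \subset BT -> closed S -> B \subset S.
Proof. by move=> H1 H2; apply: (bigcap_inf S); rewrite /= H1 H2. Qed.

Lemma bs_sub b : bs b \subset BT.
Proof. by apply/subsetP=> c; rewrite inE => /andP[]. Qed.

Lemma B_sub : (root1, root2) \in BT -> B \subset BT.
Proof.
move=> Hr; apply: B_min => //; apply/andP; split=> //.
by apply/forall_inP=> b _; rewrite bs_sub !implybT.
Qed.

Lemma B_closedB : closed B.
Proof.
apply/andP; split.
  by apply/bigcapP=> S /andP[_ /andP[]].
apply/forall_inP=> b Hb; apply/implyP=> Hne; apply/implyP=> Hl.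
apply/subsetP=> c Hc; apply/bigcapP=> S HS.
move: (HS) => /andP[_ /andP[_ /forall_inP HS']].
have HbS : b \in S by move/bigcapP: Hb; apply.
by move: (HS' b HbS); rewrite Hne Hl /= => /subsetP; apply.
Qed.

Lemma B_root : (root1, root2) \in B.
Proof. by case/andP: B_closedB. Qed.

Lemma B_step b : b \in B -> bs b != set0 -> ~~ leaf_in par2 X b.2 ->
  bs b \subset B.
Proof.
move=> Hb Hne Hl; case/andP: B_closedB => _ /forall_inP /(_ b Hb).
by rewrite Hne Hl.
Qed.

Lemma B_parent : (root1, root2) \in BT -> forall b, b \in B -> b != (root1, root2) ->
  exists p, [/\ p \in B, bs p != set0, ~~ leaf_in par2 X p.2 & b \in bs p].
Proof.
move=> Hr.
pose S := (root1, root2) |: \bigcup_(p in B | (bs p != set0) && ~~ leaf_in par2 X p.2) bs p.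
have : B \subset S.
  apply: B_min.
    apply/subsetP=> c; rewrite in_setU1 => /orP[/eqP->//|/bigcupP[p _]].
    by apply/subsetP/bs_sub.
  apply/andP; split; first by rewrite in_setU1 eqxx.
  apply/forall_inP=> b Hb; apply/implyP=> Hne; apply/implyP=> Hl.
  have HbB : b \in B.
    move: Hb; rewrite in_setU1 => /orP[/eqP->|/bigcupP[p /andP[Hp /andP[Hne' Hl']] Hbp]].
      exact: B_root.
    by move/subsetP: (@B_step _ Hp Hne' Hl'); apply.
  apply/subsetP=> c Hc; rewrite in_setU1; apply/orP; right.
  by apply/bigcupP; exists b => //; rewrite HbB Hne Hl.
move=> /subsetP H b Hb Hnr; move: (H b Hb); rewrite in_setU1 (negbTE Hnr) /=.
case/bigcupP=> p /andP[Hp /andP[Hne Hl]] Hbp; by exists p.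
Qed.

Lemma B_inX : root2 \in X ->
  (forall t, t \in X -> sons par2 t :&: X = set0 \/ sons par2 t \subset X) ->
  (root1, root2) \in BT -> forall b, b \in B -> b.2 \in X.
Proof.
move=> HrX Hsub Hr.
pose S := [set b in B | b.2 \in X].
have : B \subset S.
  apply: B_min.
    by apply/subsetP=> c; rewrite inE => /andP[/(subsetP (B_sub Hr))].
  apply/andP; split; first by rewrite inE B_root HrX.
  apply/forall_inP=> b; rewrite inE => /andP[Hb HbX].
  apply/implyP=> Hne; apply/implyP=> Hl.
  apply/subsetP=> c Hc; rewrite inE.
  rewrite (subsetP (@B_step _ Hb Hne Hl) c Hc) /=.
  move: Hl; rewrite /leaf_in HbX /= => Hl.
  case: (Hsub _ HbX) => [/eqP|Hs]; first by rewrite (negbTE Hl).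
  move: Hc; rewrite inE => /andP[_ /andP[_ Hc2]].
  by apply: (subsetP Hs); rewrite inE.
by move=> /subsetP H b /H; rewrite inE => /andP[].
Qed.

End Aux.
Arguments B_inX {C1 C2 root1 par1 root2 par2 BT X}.
Arguments B_parent {C1 C2 root1 par1 root2 par2 BT X}.
Arguments B_root {C1 C2 root1 par1 root2 par2 BT X}.
Arguments B_step {C1 C2 root1 par1 root2 par2 BT X b}.
Arguments B_sub {C1 C2 root1 par1 root2 par2 BT X}.

Theorem mainTheorem6 (I J C1 C2 : finType)
  (root1 : C1) (par1 : C1 -> option C1) (lab1 : C1 -> {set I})
  (root2 : C2) (par2 : C2 -> option C2) (lab2 : C2 -> {set J})
  (HI : is_cluster_tree root1 par1 lab1)
  (HJ : is_cluster_tree root2 par2 lab2)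
  (BT : {set C1 * C2}) (HBT : is_block_tree root1 par1 root2 par2 BT)
  (Csp : nat) (Hsp : is_sparse Csp BT)
  (X : {set C2}) (HX : is_subtree root2 par2 X) :
  let B := Bset root1 par1 root2 par2 BT X in
  let Ty := Tyset B in
  [/\ (forall t s, (t, s) \in B -> s \in X),
      is_subtree root1 par1 Ty,
      #|B| <= Csp * #|X| &
      #|Ty| <= Csp * #|X|].
Proof.
move=> B Ty.
case: HBT => Hr _ Hbt.
case: HX => HrX _ Hsub.
case: HI => [[Hpr _] _ _].
have HinX : forall t s, (t, s) \in B -> s \in X.
  by move=> t s /(B_inX HrX Hsub Hr).
have HB : #|B| <= Csp * #|X|.
  rewrite -sum1_card (partition_big (fun b : C1 * C2 => b.2) (mem X)); last first.
    by case=> t s /HinX.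
  rewrite mulnC -sum_nat_const; apply: leq_sum => s _.
  rewrite sum1dep_card.
  apply: leq_trans (proj2 Hsp s).
  apply: leq_trans (leq_imset_card (fun t => (t, s)) [set t | (t, s) \in BT]).
  apply: subset_leq_card; apply/subsetP=> [[t s']]; rewrite inE => /andP[Hb /eqP /= Es].
  subst s'; apply/imsetP; exists t => //; rewrite inE.
  by apply: (subsetP (B_sub (X:=X) Hr)) Hb.
split=> //.
- split.
  + by rewrite inE; apply/existsP; exists root2; apply: B_root.
  + move=> t; rewrite inE => /existsP[s Hts] Hnr.
    have Hne : (t, s) != (root1, root2) by apply: contra Hnr => /eqP[->].
    have [p [Hp _ _ Hbp]] := B_parent Hr _ Hts Hne.
    exists p.1; move: Hbp; rewrite inE => /andP[_ /andP[/eqP-> _]]; split=> //.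
    by rewrite inE; apply/existsP; exists p.2; case: p Hp.
  + move=> t _.
    case: (boolP (sons par1 t :&: Ty == set0)) => [/eqP|]; first by left.
    case/set0Pn=> u; rewrite !inE => /andP[/eqP Hpu /existsP[s Hus]]; right.
    have Hne : (u, s) != (root1, root2).
      by apply/eqP=> -[Eu _]; rewrite Eu Hpr in Hpu.
    have [p [Hp Hne' Hl Hbp]] := B_parent Hr _ Hus Hne.
    move: (Hbp); rewrite inE => /andP[_ /andP[/eqP /= Ept _]].
    rewrite Hpu in Ept; case: Ept => Ept.
    have HpBT : p \in BT by apply: (subsetP (B_sub (X:=X) Hr)) Hp.
    case: (Hbt p HpBT) => [E|[_ Hs2 E]]; first by rewrite E eqxx in Hne'.
    case/set0Pn: Hs2 => s2 Hs2.
    apply/subsetP=> v Hv; rewrite inE; apply/existsP; exists s2.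
    apply: (subsetP (B_step Hp Hne' Hl)).
    by rewrite E inE /= -Ept Hv.
- apply: leq_trans HB.
  apply: leq_trans (leq_imset_card (fun b : C1 * C2 => b.1) B).
  apply: subset_leq_card; apply/subsetP=> t; rewrite inE => /existsP[s Hts].
  by apply/imsetP; exists (t, s).
Qed.
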